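(* Consider a resource theory with a class $\mathbb{O}$ of free operations, and let $\mathfrak{R}$ be a nonnegative function on states that is monotone ($\mathfrak{R}(\Lambda(\omega))\le\mathfrak{R}(\omega)$ for all $\Lambda\in\mathbb{O}$), tensor-product additive ($\mathfrak{R}(\omega\otimes\omega')=\mathfrak{R}(\omega)+\mathfrak{R}(\omega')$) and superadditive ($\mathfrak{R}(\tau)\ge\mathfrak{R}(\mathrm{Tr}_B\tau)+\mathfrak{R}(\mathrm{Tr}_A\tau)$ for every state $\tau$ on $AB$). Then for all states $\rho,\rho'$ and every $r<\tilde R^0(\rho\to\rho')$, one has $\mathfrak{R}(\rho)\ge r\,\mathfrak{R}(\rho')$; i.e., $\mathfrak{R}(\rho)\ge\tilde R^0(\rho\to\rho')\,\mathfrak{R}(\rho')$.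
   Context: $\tilde R^0(\rho\to\rho')=\limsup_{n\to\infty}\sup\{r:\exists\Lambda_n\in\mathbb{O},\ \Lambda_n:S^{\otimes n}\to S'^{\otimes\lfloor rn\rfloor},\ \mathrm{Tr}_{\setminus i}\Lambda_n(\rho^{\otimes n})=\rho'\ \forall i\}$, where $\mathrm{Tr}_{\setminus i}$ is the reduced state on the $i$-th output copy. *)

(* Defs.v *)
From HB Require Import structures.
From mathcomp Require Import all_boot all_order all_algebra.
From mathcomp Require Import all_classical all_reals.
From mathcomp Require Import ereal topology normedtype sequences.
From mathcomp Require complex mxtens.
Import complex.

Set Implicit Arguments.
Unset Strict Implicit.
Unset Printing Implicit Defensive.

Import Order.TTheory GRing.Theory Num.Theory.
Local Open Scope ring_scope.

Notation Cplx R := (complex.complex R).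


Section Quantum.
Variable R : realType.
Local Notation C := (Cplx R).

(* quantum states (density matrices) on a d-dimensional system:
   positive semidefinite (hence Hermitian) with unit trace *)
Definition density (d : nat) (A : 'M[C]_d) : Prop :=
  (forall v : 'cV[C]_d, 0 <= (((map_mx Num.conj v)^T *m A *m v) 0 0)) /\
  \tr A = 1.

Definition ptrB (m n : nat) (T : 'M[C]_(m * n)) : 'M[C]_m :=
  \matrix_(i, j) \sum_(k < n) T (mxtens.mxtens_index (i, k))
                                 (mxtens.mxtens_index (j, k)).
Definition ptrA (m n : nat) (T : 'M[C]_(m * n)) : 'M[C]_n :=
  \matrix_(i, j) \sum_(k < m) T (mxtens.mxtens_index (k, i))
                                 (mxtens.mxtens_index (k, j)).
End Quantum.

(* n copies of a d-dimensional system: index k : 'I_(d^n) is written in base d,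
   the j-th digit (k %/ d^j) %% d being the index of the j-th copy. *)
Lemma digit_proof (d n : nat) (k : 'I_(d ^ n)) (j : 'I_n) :
  ((k %/ d ^ j) %% d < d)%N.
Proof.
case: d k => [|d] k; last by rewrite ltn_mod.
case: n k j => [|n] k [j Hj]; first by [].
by case: k; rewrite exp0n.
Qed.

Definition digit (d n : nat) (k : 'I_(d ^ n)) (j : 'I_n) : 'I_d :=
  @Ordinal d ((k %/ d ^ j) %% d)%N (digit_proof k j).

Section Copies.
Variable R : realType.
Local Notation C := (Cplx R).

Definition tpow (d n : nat) (A : 'M[C]_d) : 'M[C]_(d ^ n) :=
  \matrix_(k, l) \prod_(j < n) A (digit k j) (digit l j).

(* Tr_{\ i} X : reduced state on the i-th copy of X on n copies *)
Definition marg (d n : nat) (i : 'I_n) (X : 'M[C]_(d ^ n)) : 'M[C]_d :=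
  \matrix_(a, b) \sum_(k < d ^ n) \sum_(l < d ^ n)
     (if [&& digit k i == a, digit l i == b &
            [forall j : 'I_n, (j != i) ==> (digit k j == digit l j)]]
      then X k l else 0).

Definition opclass := forall m n : nat, ('M[C]_m -> 'M[C]_n) -> Prop.

Definition achievable (O : opclass) (d d' : nat) (rho : 'M[C]_d)
  (rho' : 'M[C]_d') (n : nat) (r : R) : Prop :=
  exists Lam : 'M[C]_(d ^ n) -> 'M[C]_(d' ^ (Num.truncn (r * n%:R))),
    O _ _ Lam /\ forall i, marg i (Lam (tpow n rho)) = rho'.

Definition R0tilde (O : opclass) (d d' : nat) (rho : 'M[C]_d)
  (rho' : 'M[C]_d') : \bar R :=
  limn_esup (fun n => ereal_sup
    [set (r%:E)%E | r in [set r : R | 0 <= r /\ achievable O rho rho' n r]]).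
End Copies.

(* Main.v *)
Require Import Defs.
From HB Require Import structures.
From mathcomp Require Import all_boot all_order all_algebra.
From mathcomp Require Import all_classical all_reals.
From mathcomp Require Import ereal topology normedtype sequences.
From mathcomp Require complex mxtens.
Import complex.
Import Order.TTheory GRing.Theory Num.Theory.
Local Open Scope ring_scope.
From mathcomp Require Import sesquilinear spectral.
From mathcomp Require Import ring lra.
Set Implicit Arguments.
Unset Strict Implicit.
Unset Printing Implicit Defensive.

Section LA.
Variable C : numClosedFieldType.
Local Open Scope sesquilinear_scope.

Definition qf n (A : 'M[C]_n) (v : 'cV[C]_n) :=
  ((map_mx Num.conj v)^T *m A *m v) 0 0.
Definition psd n (A : 'M[C]_n) := forall v, 0 <= qf A v.

Lemma qfE n (A : 'M[C]_n) v :
  qf A v = \sum_i \sum_j (v i 0)^* * A i j * v j 0.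
Proof.
rewrite /qf mxE; under eq_bigr do rewrite mxE mulr_suml; rewrite exchange_big.
by apply: eq_bigr => i _; apply: eq_bigr => j _; rewrite !mxE.
Qed.

Lemma sum_delta n (F : 'I_n -> C) k : \sum_a F a * (a == k)%:R = F k.
Proof.
rewrite (bigD1 k) //= eqxx mulr1 big1 ?addr0 // => a /negbTE ->.
by rewrite mulr0.
Qed.

Lemma sum_delta' n (F : 'I_n -> C) k : \sum_a (a == k)%:R * F a = F k.
Proof. by rewrite -(sum_delta F k); apply: eq_bigr => a _; rewrite mulrC. Qed.

Lemma sum2 n (F : 'I_n -> C) i j c :
  \sum_a F a * ((a == i)%:R + c * (a == j)%:R) = F i + c * F j.
Proof.
under eq_bigr => a _ do rewrite mulrDr mulrCA.
by rewrite big_split /= -mulr_sumr !sum_delta.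
Qed.

Lemma ge0_conj (x : C) : 0 <= x -> x^* = x.
Proof. by move=> /ger0_real /CrealP. Qed.

Lemma psd_herm n (A : 'M[C]_n) : psd A -> forall i j, A j i = (A i j)^*.
Proof.
move=> hA i j.
pose v (c : C) := \col_(a < n) ((a == i)%:R + c * (a == j)%:R).
have qv c : qf A (v c) = A i i + c * A i j + c^* * A j i + c^* * c * A j j.
  rewrite qfE.
  transitivity (\sum_a ((A a i + c * A a j) * ((a == i)%:R + c^* * (a == j)%:R))).
    apply: eq_bigr => a _.
    transitivity (\sum_b (((a == i)%:R + c^* * (a == j)%:R) * A a b) *
       ((b == i)%:R + c * (b == j)%:R)).
      apply: eq_bigr => b _; rewrite !mxE.
      by rewrite rmorphD rmorphM /= !conjC_nat.
    rewrite sum2 mulrC; ring.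
  rewrite sum2; ring.
have r1 := ge0_conj (hA (v 0)).
have r2 := ge0_conj (hA (v 1)).
have r3 := ge0_conj (hA (v 'i)).
have r4 := ge0_conj (hA (v (-1))).
rewrite !qv in r1 r2 r3 r4.
rewrite !conjC0 !mul0r !addr0 in r1.
rewrite conjC1 !mul1r in r2.
rewrite conjCi in r3.
have cm1 : (-1 : C)^* = -1 by rewrite rmorphN /= conjC1.
rewrite cm1 mulrNN !mul1r !mulN1r in r4.
move: r2 r3 r4; rewrite !rmorphD !rmorphM !rmorphN /= conjCi r1 => r2 r3 r4.
rewrite opprK in r3.
have two : (2 : C) != 0 by rewrite pnatr_eq0.
have hb : (A j j)^* = A j j.
  apply: (mulIf two).
  move: r2 r4; set a := A i i; set x := A i j; set y := A j i; set b := A j j.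
  move=> r2 r4.
  have -> : b^* * 2 = ((a + x^* + y^* + b^*) + (a - x^* - y^* + b^*)) - 2 * a by ring.
  rewrite r2 r4; ring.
rewrite hb in r2 r3 r4.
have E1 : (A i j)^* + (A j i)^* = A i j + A j i.
  apply: (addrI (A i i)); apply: (addIr (A j j)).
  by rewrite !addrA r2.
have ii : - 'i * 'i = 1 :> C by rewrite mulNr -expr2 sqrCi opprK.
have E2 : (A j i)^* - (A i j)^* = A i j - A j i.
  have hi : ('i : C) != 0 by rewrite neq0Ci.
  apply: (mulfI hi).
  have ii' : 'i * - 'i = 1 :> C by rewrite mulrN -mulNr ii.
  move: r3; rewrite ii ii' !mul1r.
  set a := A i i; set x := A i j; set y := A j i; set b := A j j.
  move=> r3.
  have : 'i * (y^* - x^*) = 'i * (x - y) + ((a + - 'i * x^* + 'i * y^* + b) -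
      (a + 'i * x + - 'i * y + b)) by ring.
  by rewrite r3 subrr addr0.
have : 2 * (A i j)^* = ((A i j)^* + (A j i)^*) - ((A j i)^* - (A i j)^*) by ring.
rewrite E1 E2 => h.
by apply: (mulfI two); rewrite h; ring.
Qed.

Lemma psd_hermsym n (A : 'M[C]_n) : psd A -> A \is hermsymmx.
Proof.
move=> hA; apply/is_hermitianmxP; rewrite expr0 scale1r.
by apply/matrixP => i j; rewrite !mxE (psd_herm hA j i).
Qed.

Lemma psd_decomp n (A : 'M[C]_n) : psd A -> exists (P : 'M[C]_n) (x : 'rV[C]_n),
  (forall k, 0 <= x 0 k) /\ forall i j, A i j = \sum_k (P k i)^* * x 0 k * P k j.
Proof.
move=> hA.
have hN := hermitian_normalmx (psd_hermsym hA).
have /orthomx_spectralP eA := hN.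
set P := spectralmx A in eA; set x := spectral_diag A in eA.
have uP : P \is unitarymx := spectral_unitarymx A.
rewrite invmx_unitary // in eA.
exists P, x; split; last first.
  move=> i j; rewrite eA !mxE; apply: eq_bigr => k _.
  by rewrite mul_mx_diag !mxE.
move=> k.
pose v : 'cV[C]_n := P ^t* *m delta_mx k 0.
have := hA v; rewrite /qf.
have -> : (map_mx Num.conj v)^T = delta_mx 0 k *m P.
  rewrite /v map_mxM trmx_mul.
  have -> : (map_mx Num.conj (P ^t*)) = P^T.
    by apply/matrixP => a b; rewrite !mxE conjCK.
  rewrite trmxK; congr (_ *m _); apply/matrixP => a b; rewrite !mxE.
  by rewrite rmorph_nat andbC.
rewrite /v eA.
have PP : P *m P ^t* = 1%:M by apply/unitarymxP.
rewrite !mulmxA -(mulmxA (delta_mx 0 k)) PP mulmx1 -(mulmxA _ P) PP mulmx1.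
rewrite mul_mx_diag mxE (bigD1 k) //= big1 ?addr0.
  by rewrite !mxE !eqxx mul1r mulr1.
by move=> a hak; rewrite !mxE (negbTE hak) /= ?andbF ?mulr0 ?mul0r.
Qed.

Lemma sum_tens m n (F : 'I_(m * n) -> C) :
  \sum_k F k = \sum_i \sum_a F (mxtens.mxtens_index (i, a)).
Proof.
rewrite pair_big /=; apply: reindex => /=.
exists (@mxtens.mxtens_unindex m n) => [[i a]|k] _ /=.
  by rewrite mxtens.mxtens_indexK. exact: (mxtens.mxtens_unindexK k).
Qed.

Lemma sum_prod2 m (f g : 'I_m -> C) (c d : C) :
  c * ((\sum_i f i)^* * d * \sum_j g j) = \sum_i \sum_j c * (f i)^* * d * g j.
Proof.
rewrite rmorph_sum /= mulr_suml mulr_suml mulr_sumr; apply: eq_bigr => i _.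
rewrite mulr_sumr mulr_sumr; apply: eq_bigr => j _; ring.
Qed.

Lemma psd_tens m n (A : 'M[C]_m) (B : 'M[C]_n) :
  psd A -> psd B -> psd (mxtens.tensmx A B).
Proof.
move=> hA hB v.
have [P [x [x0 eA]]] := psd_decomp hA.
pose w p : 'cV[C]_n := \col_a \sum_i P p i * v (mxtens.mxtens_index (i, a)) 0.
suff -> : qf (mxtens.tensmx A B) v = \sum_p x 0 p * qf B (w p).
  by apply: sumr_ge0 => p _; apply: mulr_ge0.
rewrite qfE sum_tens.
under eq_bigr => i _ do under eq_bigr => a _ do rewrite sum_tens.
under eq_bigr => i _ do under eq_bigr => a _ do under eq_bigr => j _ do
  under eq_bigr => b _ do rewrite mxtens.tensmxE eA mulr_suml mulr_sumr mulr_suml.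
under eq_bigr => i _ do under eq_bigr => a _ do under eq_bigr => j _ do
  rewrite exchange_big.
under eq_bigr => i _ do under eq_bigr => a _ do rewrite exchange_big.
under eq_bigr => i _ do rewrite exchange_big.
rewrite exchange_big; apply: eq_bigr => p _.
have -> : x 0 p * qf B (w p) = \sum_i \sum_a \sum_j \sum_b
   ((v (mxtens.mxtens_index (i, a)) 0)^* * ((P p i)^* * x 0 p * P p j * B a b) *
    v (mxtens.mxtens_index (j, b)) 0).
  rewrite qfE mulr_sumr.
  under eq_bigr => a _ do rewrite mulr_sumr.
  under eq_bigr => a _ do under eq_bigr => b _ do rewrite !mxE sum_prod2.
  under eq_bigr => a _ do rewrite exchange_big.
  rewrite exchange_big; apply: eq_bigr => i _.
  apply: eq_bigr => a _.
  rewrite exchange_big; apply: eq_bigr => j _.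
  apply: eq_bigr => b _.
  rewrite /=; ring.
by [].
Qed.

Lemma tr_tens m n (A : 'M[C]_m) (B : 'M[C]_n) :
  \tr (mxtens.tensmx A B) = \tr A * \tr B.
Proof.
rewrite /mxtrace sum_tens mulr_suml; apply: eq_bigr => i _.
rewrite mulr_sumr; apply: eq_bigr => a _.
by rewrite mxtens.tensmxE.
Qed.

End LA.

Section Dens.
Variable R : realType.
Local Notation C := (Cplx R).

Lemma densityE n (A : 'M[C]_n) : density A <-> psd A /\ \tr A = 1.
Proof. by []. Qed.

Lemma density_tens m n (A : 'M[C]_m) (B : 'M[C]_n) :
  density A -> density B -> density (mxtens.tensmx A B).
Proof.
move=> [hA tA] [hB tB]; split; first exact: psd_tens.
by rewrite tr_tens tA tB mulr1.
Qed.

Lemma density_ptrB m n (T : 'M[C]_(m * n)) : density T -> density (ptrB T).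
Proof.
move=> [hT tT]; split; last first.
  rewrite -tT /mxtrace sum_tens; apply: eq_bigr => i _; by rewrite mxE.
move=> v; change (0 <= qf (ptrB T) v).
pose u k : 'cV[C]_(m * n) :=
  \col_l (v (@mxtens.mxtens_unindex m n l).1 0 *
          ((@mxtens.mxtens_unindex m n l).2 == k)%:R).
suff -> : qf (ptrB T) v = \sum_k qf T (u k).
  by apply: sumr_ge0 => k _; apply: hT.
rewrite qfE.
under eq_bigr => i _ do under eq_bigr => j _ do
  rewrite mxE mulr_sumr mulr_suml.
under eq_bigr => i _ do rewrite exchange_big.
rewrite exchange_big; apply: eq_bigr => k _.
rewrite qfE sum_tens; apply: eq_bigr => i _.
symmetry; rewrite (bigD1 k) //= addrC big1 ?add0r; last first.
  move=> a /negbTE hak; apply: big1 => l _; rewrite !mxE mxtens.mxtens_indexK /=.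
  by rewrite hak mulr0 rmorph0 !mul0r.
rewrite sum_tens; apply: eq_bigr => j _.
rewrite (bigD1 k) //= addrC big1 ?add0r; last first.
  by move=> b /negbTE hbk; rewrite !mxE !mxtens.mxtens_indexK /= hbk !mulr0.
by rewrite !mxE !mxtens.mxtens_indexK /= eqxx !mulr1. 
Qed.
End Dens.

Section Digits.
Variable d : nat.

Definition eS n : (d ^ n * d = d ^ n.+1)%N := esym (expnSr d n).

Definition idx n (q : 'I_(d ^ n)) (a : 'I_d) : 'I_(d ^ n.+1) :=
  cast_ord (eS n) (mxtens.mxtens_index (q, a)).

Lemma idx_val n q a : (@idx n q a : nat) = (q * d + a)%N.
Proof. by []. Qed.

Lemma digit_idx0 n q a : digit (@idx n q a) ord0 = a.
Proof.
apply: val_inj => /=; rewrite expn0 divn1 modnMDl modn_small //.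
Qed.

Lemma digit_idxS n q a j : digit (@idx n q a) (lift ord0 j) = digit q j.
Proof.
apply: val_inj => /=.
have d0 : (0 < d)%N by case: a => a /=; case: d => //.
have -> : bump 0 j = j.+1 by rewrite /bump leq0n add1n.
by rewrite expnS divnMA divnMDl // (divn_small (ltn_ord a)) addn0.
Qed.

Lemma idx_inj n q a q' b : (@idx n q a == idx q' b) = ((q, a) == (q', b)).
Proof.
apply/eqP/eqP => [h|[-> ->] //].
have := congr1 (@mxtens.mxtens_unindex _ _) (congr1 (cast_ord (esym (eS n))) h).
by rewrite /idx !cast_ordK !mxtens.mxtens_indexK.
Qed.

Lemma idx_surj n (k : 'I_(d ^ n.+1)) : exists q a, k = @idx n q a.
Proof.
exists (mxtens.mxtens_unindex (cast_ord (esym (eS n)) k)).1,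
       (mxtens.mxtens_unindex (cast_ord (esym (eS n)) k)).2.
rewrite /idx -surjective_pairing mxtens.mxtens_unindexK.
by rewrite cast_ordKV.
Qed.

Lemma forall_split n (Q : 'I_n.+1 -> bool) :
  [forall j, Q j] = Q ord0 && [forall j : 'I_n, Q (lift ord0 j)].
Proof.
apply/forallP/andP => [h|[h0 /forallP h] j]; first by split => //; apply/forallP.
by case: (unliftP ord0 j) => [j' ->|->].
Qed.

End Digits.

Lemma digit_inj d n (q q' : 'I_(d ^ n)) :
  [forall j, digit q j == digit q' j] = (q == q').
Proof.
elim: n q q' => [|n IH] q q'.
  have h : forall z : 'I_(d ^ 0), z = ord0 by move=> z; apply: val_inj => /=;
    case: z => [[|z] //].
  by rewrite (h q) (h q') eqxx; apply/forallP => j; rewrite eqxx.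
have [q1 [a ->]] := idx_surj q; have [q1' [b ->]] := idx_surj q'.
rewrite forall_split !digit_idx0 idx_inj xpair_eqE andbC; congr (_ && _).
rewrite -IH; apply: eq_forallb => j; by rewrite !digit_idxS.
Qed.

Lemma sum_idx (C : nmodType) d n (F : 'I_(d ^ n.+1) -> C) :
  \sum_k F k = \sum_q \sum_a F (@idx d n q a).
Proof.
rewrite (reindex (cast_ord (eS d n))) /=; last first.
  by exists (cast_ord (esym (eS d n))) => k _; rewrite (cast_ordK, cast_ordKV).
rewrite pair_big /=; apply: reindex => /=.
exists (@mxtens.mxtens_unindex _ _) => [[i a]|k] _ /=.
  by rewrite mxtens.mxtens_indexK.
exact: (mxtens.mxtens_unindexK k).
Qed.

Section Tpow.
Variable R : realType.
Local Notation C := (Cplx R).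

Lemma density_cast m m' (e : m = m') (X : 'M[C]_m) :
  density (castmx (e, e) X) <-> density X.
Proof. by case: m' / e; rewrite castmx_id. Qed.

Lemma Res_cast (Res : forall d : nat, 'M[C]_d -> R) m m' (e : m = m') X :
  Res m' (castmx (e, e) X) = Res m X.
Proof. by case: m' / e; rewrite castmx_id. Qed.

Lemma tpowS d n (rho : 'M[C]_d) :
  tpow n.+1 rho = castmx (eS d n, eS d n) (mxtens.tensmx (tpow n rho) rho).
Proof.
apply/matrixP => k l.
have [q [a ->]] := idx_surj k; have [q' [b ->]] := idx_surj l.
rewrite castmxE /= !mxE big_ord_recl !digit_idx0.
have -> : cast_ord (esym (eS d n)) (idx q a) = mxtens.mxtens_index (q, a).
  by apply: val_inj.
have -> : cast_ord (esym (eS d n)) (idx q' b) = mxtens.mxtens_index (q', b).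
  by apply: val_inj.
rewrite !mxtens.mxtens_indexK /= mulrC; congr (_ * _); apply: eq_bigr => j _.
by rewrite !digit_idxS.
Qed.

Lemma density_tpow0 d (rho : 'M[C]_d) : density (tpow 0 rho).
Proof.
split.
  move=> v; change (0 <= qf (tpow 0 rho) v); rewrite qfE !big_ord1 mxE big_ord0.
  by rewrite mulr1 mulrC mul_conjC_ge0.
by rewrite /mxtrace big_ord1 mxE big_ord0.
Qed.

Lemma density_tpow d n (rho : 'M[C]_d) : density rho -> density (tpow n rho).
Proof.
move=> hr; elim: n => [|n IH]; first exact: density_tpow0.
by rewrite tpowS density_cast; apply: density_tens.
Qed.
End Tpow.

Section Marg.
Variable R : realType.
Local Notation C := (Cplx R).
Variable d : nat.

Lemma sum_ifeq (T : finType) (y : T) (F : T -> C) :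
  \sum_x (if x == y then F x else 0) = F y.
Proof. by rewrite -big_mkcond big_pred1_eq. Qed.

Definition uncast n (X : 'M[C]_(d ^ n.+1)) : 'M[C]_(d ^ n * d) :=
  castmx (esym (eS d n), esym (eS d n)) X.

Lemma uncastE n (X : 'M[C]_(d ^ n.+1)) q a q' b :
  uncast X (mxtens.mxtens_index (q, a)) (mxtens.mxtens_index (q', b)) =
  X (idx q a) (idx q' b).
Proof. by rewrite castmxE; congr (X _ _); apply: val_inj. Qed.

Lemma uncastK n (X : 'M[C]_(d ^ n.+1)) : X = castmx (eS d n, eS d n) (uncast X).
Proof. by rewrite /uncast castmx_comp castmx_id. Qed.

Lemma marg0 n (X : 'M[C]_(d ^ n.+1)) : marg ord0 X = ptrA (uncast X).
Proof.
apply/matrixP => a b; rewrite !mxE sum_idx.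
under eq_bigr => q _ do under eq_bigr => a1 _ do rewrite sum_idx.
have cond : forall q a1 q' b1,
  (if [&& digit (@idx d n q a1) ord0 == a, digit (@idx d n q' b1) ord0 == b &
     [forall j, (j != ord0) ==> (digit (idx q a1) j == digit (idx q' b1) j)]]
   then X (idx q a1) (idx q' b1) else 0) =
  if b1 == b then (if q' == q then (if a1 == a then
     X (idx q a1) (idx q' b1) else 0) else 0) else 0.
  move=> q a1 q' b1; rewrite !digit_idx0 forall_split /=.
  have -> : [forall j : 'I_n,
     (digit (idx q a1) (lift ord0 j) == digit (idx q' b1) (lift ord0 j))] =
     (q == q').
    by rewrite -digit_inj; apply: eq_forallb => j; rewrite !digit_idxS.
  by rewrite [q' == q]eq_sym; case: (a1 == a); case: (b1 == b); case: (q == q').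
under eq_bigr => q _ do under eq_bigr => a1 _ do under eq_bigr => q' _ do
  under eq_bigr => b1 _ do rewrite cond.
under eq_bigr => q _ do under eq_bigr => a1 _ do under eq_bigr => q' _ do
  rewrite sum_ifeq.
under eq_bigr => q _ do under eq_bigr => a1 _ do rewrite sum_ifeq.
under eq_bigr => q _ do rewrite sum_ifeq.
by apply: eq_bigr => q _; rewrite uncastE.
Qed.

Lemma margS n (i : 'I_n) (X : 'M[C]_(d ^ n.+1)) :
  marg (lift ord0 i) X = marg i (ptrB (uncast X)).
Proof.
apply/matrixP => a b; rewrite !mxE sum_idx.
under eq_bigr => q _ do under eq_bigr => a1 _ do rewrite sum_idx.
set cnd := fun q q' : 'I_(d ^ n) => [&& digit q i == a, digit q' i == b &
     [forall j, (j != i) ==> (digit q j == digit q' j)]].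
have cond : forall q a1 q' b1,
  (if [&& digit (@idx d n q a1) (lift ord0 i) == a,
          digit (@idx d n q' b1) (lift ord0 i) == b &
     [forall j, (j != lift ord0 i) ==> (digit (idx q a1) j == digit (idx q' b1) j)]]
   then X (idx q a1) (idx q' b1) else 0) =
  if cnd q q' then (if b1 == a1 then X (idx q a1) (idx q' b1) else 0) else 0.
  move=> q a1 q' b1; rewrite !digit_idxS forall_split /= !digit_idx0.
  have -> : [forall j : 'I_n, (lift ord0 j != lift ord0 i) ==>
     (digit (idx q a1) (lift ord0 j) == digit (idx q' b1) (lift ord0 j))] =
     [forall j, (j != i) ==> (digit q j == digit q' j)].
    apply: eq_forallb => j.
    by rewrite (inj_eq (@lift_inj _ ord0)) !digit_idxS.
  rewrite /cnd [b1 == a1]eq_sym.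
  by case: (digit q i == a); case: (digit q' i == b); case: (a1 == b1);
    case: [forall j, _].
under eq_bigr => q _ do under eq_bigr => a1 _ do under eq_bigr => q' _ do
  under eq_bigr => b1 _ do rewrite cond.
apply: eq_bigr => q _.
rewrite exchange_big; apply: eq_bigr => q' _.
rewrite /cnd; case: ifP => _.
  rewrite mxE; apply: eq_bigr => c _; by rewrite sum_ifeq uncastE.
by apply: big1 => a1 _; apply: big1.
Qed.
End Marg.

Lemma limsup_gt (R : realType) (u : (\bar R)^nat) (x : \bar R) :
  (x < limn_esup u)%E -> forall N, exists2 n, (N <= n)%N & (x < u n)%E.
Proof.
move=> h N.
have hle : (limn_esup u <= esups u N)%E.
  rewrite limn_esup_lim (cvg_lim _ (@cvg_esups_inf R u)) //.
  by apply: ge_ereal_inf; exists (esups u N) => //; exists N.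
have := lt_le_trans h hle; rewrite /esups /= => /ereal_sup_gt [y [k hk <-] hy].
by exists k.
Qed.

Unset Implicit Arguments.
Set Strict Implicit.

Theorem mainTheorem13 (R : realType) (O : opclass R)
  (Res : forall d : nat, 'M[Cplx R]_d -> R)
  (HOstate : forall m n (Lam : 'M[Cplx R]_m -> 'M[Cplx R]_n), O m n Lam ->
     forall w, density w -> density (Lam w))
  (Hnonneg : forall d (w : 'M[Cplx R]_d), density w -> 0 <= Res d w)
  (Hmono : forall m n (Lam : 'M[Cplx R]_m -> 'M[Cplx R]_n) (w : 'M[Cplx R]_m),
     O m n Lam -> density w -> Res n (Lam w) <= Res m w)
  (Hadd : forall m n (w : 'M[Cplx R]_m) (w' : 'M[Cplx R]_n),
     density w -> density w' -> Res (m * n)%N (mxtens.tensmx w w') = Res m w + Res n w')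
  (Hsuper : forall m n (tau : 'M[Cplx R]_(m * n)), density tau ->
     Res m (ptrB tau) + Res n (ptrA tau) <= Res (m * n)%N tau)
  (d d' : nat) (rho : 'M[Cplx R]_d) (rho' : 'M[Cplx R]_d')
  (Hrho : density rho) (Hrho' : density rho') :
  (forall r : R, (r%:E < R0tilde O rho rho')%E -> r * Res d' rho' <= Res d rho) /\
  (R0tilde O rho rho' * (Res d' rho')%:E <= (Res d rho)%:E)%E.
Proof.
have Rtp : forall n, Res (d ^ n)%N (tpow n rho) = n%:R * Res d rho.
  elim => [|n IH].
    have D0 := density_tpow0 rho.
    have E : mxtens.tensmx (tpow 0 rho : 'M_1) (tpow 0 rho : 'M_1) =
             (tpow 0 rho : 'M_(1 * 1)).
      by apply/matrixP => k l; rewrite !mxE !big_ord0 mulr1.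
    have h := Hadd 1%N 1%N (tpow 0 rho) (tpow 0 rho) D0 D0.
    rewrite E in h.
    have h' : Res 1%N (tpow 0 rho) = Res 1%N (tpow 0 rho) + Res 1%N (tpow 0 rho)
      := h.
    change (Res 1%N (tpow 0 rho) = 0%:R * Res d rho).
    rewrite mul0r; lra.
  rewrite tpowS Res_cast Hadd ?IH; last exact: Hrho.
    by rewrite -nat1r mulrDl mul1r addrC.
  exact: density_tpow.
have Out : forall k (X : 'M[Cplx R]_(d' ^ k)), density X ->
    (forall i, marg i X = rho') -> k%:R * Res d' rho' <= Res (d' ^ k)%N X.
  elim => [|k IH] X DX HX.
    by rewrite mul0r; apply: Hnonneg.
  rewrite (uncastK X) Res_cast.
  have DY : density (uncast X) by apply/(density_cast (eS d' k)); rewrite -uncastK.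
  have hs := Hsuper _ _ _ DY.
  have hA : ptrA (uncast X) = rho' by rewrite -marg0 HX.
  have hB : k%:R * Res d' rho' <= Res (d' ^ k)%N (ptrB (uncast X)).
    apply: IH; first exact: density_ptrB.
    by move=> i; rewrite -margS HX.
  rewrite hA in hs.
  rewrite -nat1r mulrDl mul1r; lra.
have Key : forall n r, 0 <= r -> achievable O rho rho' n r ->
    (Num.truncn (r * n%:R))%:R * Res d' rho' <= n%:R * Res d rho.
  move=> n r r0 [Lam [OL HL]].
  have Dn := density_tpow n Hrho.
  apply: le_trans (Out _ _ (HOstate _ _ _ OL _ Dn) HL) _.
  by rewrite -Rtp; apply: Hmono.
have R'0 : 0 <= Res d' rho' := Hnonneg _ _ Hrho'.
have R0 : 0 <= Res d rho := Hnonneg _ _ Hrho.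
have P1 : forall r : R, (r%:E < R0tilde O rho rho')%E -> r * Res d' rho' <= Res d rho.
  move=> r hr; rewrite leNgt; apply/negP => hlt.
  set eps := r * Res d' rho' - Res d rho.
  have e0 : 0 < eps by rewrite /eps subr_gt0.
  have q0 : 0 <= Res d' rho' / eps by rewrite divr_ge0 // ltW.
  set N := (Num.truncn (Res d' rho' / eps)).+1.
  have hN : Res d' rho' / eps < N%:R by have /andP[_ ->] := truncn_itv q0.
  have [n hn hu] := limsup_gt hr N.
  have [y [s [s0 hs] <-] hy] := ereal_sup_gt hu.
  rewrite lte_fin in hy.
  have K := Key n s s0 hs.
  have sn0 : 0 <= s * n%:R by rewrite mulr_ge0.
  have /andP[_ F2] := truncn_itv sn0.
  rewrite -addn1 natrD in F2.
  set T := (Num.truncn (s * n%:R))%:R in K F2.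
  have nN : N%:R <= n%:R :> R by rewrite ler_nat.
  have F5 : Res d' rho' < n%:R * eps.
    by rewrite -ltr_pdivrMr //; apply: lt_le_trans hN nN.
  have F6 : (s * n%:R - 1) * Res d' rho' <= T * Res d' rho'.
    by apply: ler_wpM2r => //; lra.
  have F7 : r * n%:R * Res d' rho' <= s * n%:R * Res d' rho'.
    by apply: ler_wpM2r => //; apply: ler_wpM2r => //; apply: ltW.
  move: F5; rewrite /eps; nra.
split => //.
have [->|nz] := eqVneq (Res d' rho') 0; first by rewrite mule0 lee_fin.
have pos : 0 < Res d' rho' by rewrite lt0r nz R'0.
set q := Res d rho / Res d' rho'.
have hq : q * Res d' rho' = Res d rho by rewrite /q divfK.
case E: (R0tilde O rho rho') => [x| |]; rewrite E in P1.
- rewrite -EFinM lee_fin -hq ler_pM2r //.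
  rewrite leNgt; apply/negP => hx.
  have := P1 ((x + q) / 2); rewrite lte_fin -hq ler_pM2r //.
  move=> h; have : (x + q) / 2 <= q by apply: h; lra.
  lra.
- exfalso; have := P1 (q + 1) (ltry _); rewrite -hq ler_pM2r //; lra.
- by rewrite mulNyr gtr0_sg // mul1e leNye.
Qed.
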